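(* Let $m=n=1$, $\boldsymbol s=(s_1,s_2)\in\{(1,-1),(-1,1)\}$ and $\tilde{\boldsymbol s}=(s_2,s_1)$. Let $\boldsymbol\lambda$ be typical, $\boldsymbol z$ $h$-generic, let $y$ be a polynomial of degree $l$ representing a solution of the BAE associated to $\boldsymbol s,\boldsymbol\lambda,\boldsymbol z,l$, and let $\tilde y$ be the polynomial with $y\,\tilde y[-s_1]=\varphi^{\boldsymbol s}-\psi^{\boldsymbol s}$. Then \[s_1\frac{T_1^{\boldsymbol s}y[s_1]}{T_1^{\boldsymbol s}[s_1]y}+s_2\frac{T_2^{\boldsymbol s}y[-s_2]}{T_2^{\boldsymbol s}[s_2]y}=\tilde s_1\frac{T_1^{\tilde{\boldsymbol s}}\tilde y[\tilde s_1]}{T_1^{\tilde{\boldsymbol s}}[\tilde s_1]\tilde y}+\tilde s_2\frac{T_2^{\tilde{\boldsymbol s}}\tilde y[-\tilde s_2]}{T_2^{\tilde{\boldsymbol s}}[\tilde s_2]\tilde y}.\]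
   Context: Fix $h\in\mathbb{C}^\times$; $f[i](x)=f(x-ih)$. Polynomial $\mathfrak{gl}_{1|1}$ weights $\lambda^{(1)},\dots,\lambda^{(p)}$; for each $k$ write the weight of $\lambda^{(k)}$ with respect to $\boldsymbol s$ (eigenvalues of $e_{\sigma(1)\sigma(1)},e_{\sigma(2)\sigma(2)}$ on the $\boldsymbol s$-highest weight vector of $L_{\lambda^{(k)}}$, where $\sigma$ is the identity if $\boldsymbol s=(1,-1)$ and the transposition if $\boldsymbol s=(-1,1)$) as $(a_k,b_k)$, $a_k,b_k\in\mathbb{Z}_{\ge0}$, with $b_k=0$ whenever $a_k=0$. $\lambda^{(k)}$ is typical iff $a_k+b_k\ne0$; $\boldsymbol\lambda$ is typical if some $\lambda^{(k)}$ is typical. Set $\tilde a_k=b_k+1,\tilde b_k=a_k-1$ if $a_k+b_k\ne0$ and $\tilde a_k=\tilde b_k=0$ otherwise (these are the weights with respect to $\tilde{\boldsymbol s}$). $\boldsymbol z$ $h$-generic ($z_i-z_j\notin h\mathbb{Z}$). $T_1^{\boldsymbol s}=\prod_k\prod_{j=1}^{a_k}(x-z_k+s_1jh)$, $T_2^{\boldsymbol s}=\prod_k\prod_{j=1}^{b_k}(x-z_k+s_2jh)$, $T_1^{\tilde{\boldsymbol s}}=\prod_k\prod_{j=1}^{\tilde a_k}(x-z_k+\tilde s_1jh)$, $T_2^{\tilde{\boldsymbol s}}=\prod_k\prod_{j=1}^{\tilde b_k}(x-z_k+\tilde s_2jh)$. $\varphi^{\boldsymbol s}=\prod_{k:a_k+b_k\ne0}(x-z_k+s_1a_kh)$,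 $\psi^{\boldsymbol s}=\prod_{k:a_k+b_k\ne0}(x-z_k+s_2b_kh)$. The BAE associated to $\boldsymbol s,\boldsymbol\lambda,\boldsymbol z,l$ in $t_1,\dots,t_l$: $\prod_{k:a_k+b_k\ne0}\frac{t_j-z_k+s_1a_kh}{t_j-z_k+s_2b_kh}=1$, $j=1,\dots,l$, with the requirement that a root of multiplicity $r$ of this equation appears at most $r$ times among the $t_j$; $y=\prod_j(x-t_j)$ represents $(t_1,\dots,t_l)$. *)

(* Defs.v *)
From mathcomp Require Import all_boot all_algebra.
From mathcomp Require Import complex.
From mathcomp Require Import Rstruct.
Set Implicit Arguments. Unset Strict Implicit. Unset Printing Implicit Defensive.
Import GRing.Theory.
Local Open Scope ring_scope.

Definition CC : fieldType := complex Rdefinitions.R.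

Notation ratfun := {fraction {poly CC}}.
Definition rf (p : {poly CC}) : ratfun := FracField.tofrac p.

(* f[i](x) = f(x - i h), for i an integer. *)
Definition shift (h : CC) (i : int) (f : {poly CC}) : {poly CC} :=
  f \Po ('X - (i%:~R * h)%:P).

(* s = (s1, s2) encoded by a boolean: true <-> s = (1,-1), false <-> s = (-1,1). *)
Definition s1 (b : bool) : int := if b then 1 else -1.
Definition s2 (b : bool) : int := - s1 b.
(* tilde s = (s2, s1) corresponds to negb b. *)

Section Data.
Variables (p : nat) (a b : 'I_p -> nat) (z : 'I_p -> CC) (h : CC).

Definition typicalk (k : 'I_p) : bool := (a k + b k != 0)%N.
Definition typical : Prop := exists k, typicalk k.

(* weights with respect to tilde s *)
Definition at_ (k : 'I_p) : nat := if typicalk k then (b k).+1 else 0%N.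
Definition bt_ (k : 'I_p) : nat := if typicalk k then (a k).-1 else 0%N.

Definition Tpoly (c : int) (n : 'I_p -> nat) : {poly CC} :=
  \prod_(k < p) \prod_(1 <= j < (n k).+1)
     ('X - (z k)%:P + (c%:~R * j%:R * h)%:P).

Definition phi (bs : bool) : {poly CC} :=
  \prod_(k < p | typicalk k) ('X - (z k)%:P + ((s1 bs)%:~R * (a k)%:R * h)%:P).
Definition psi (bs : bool) : {poly CC} :=
  \prod_(k < p | typicalk k) ('X - (z k)%:P + ((s2 bs)%:~R * (b k)%:R * h)%:P).

Definition BAE_solution (bs : bool) (l : nat) (t : 'I_l -> CC) : Prop :=
  forall j : 'I_l,
    (forall k, typicalk k -> t j - z k + (s2 bs)%:~R * (b k)%:R * h != 0) /\
    \prod_(k < p | typicalk k)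
       ((t j - z k + (s1 bs)%:~R * (a k)%:R * h) /
        (t j - z k + (s2 bs)%:~R * (b k)%:R * h)) = 1 /\
    (* a root of multiplicity r of the equation appears at most r times *)
    (#|[pred i : 'I_l | t i == t j]| <= mup (t j) (phi bs - psi bs))%N.

End Data.

Definition h_generic (p : nat) (z : 'I_p -> CC) (h : CC) : Prop :=
  forall i j : 'I_p, i != j -> forall n : int, z i - z j != n%:~R * h.

Definition weights_ok (p : nat) (a b : 'I_p -> nat) : Prop :=
  forall k, a k = 0%N -> b k = 0%N.

(* Main.v *)
Require Import Defs.
From mathcomp Require Import all_boot all_algebra.
From mathcomp Require Import complex.
From mathcomp Require Import ring.
Import GRing.Theory.
Local Open Scope ring_scope.

Lemma shiftM h c (f g : {poly CC}) : shift h c (f * g) = shift h c f * shift h c g.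
Proof. by rewrite /shift comp_polyM. Qed.

Lemma shiftB h c (f g : {poly CC}) : shift h c (f - g) = shift h c f - shift h c g.
Proof. by rewrite /shift comp_polyB. Qed.

Lemma shift_prod h c (I : Type) (r : seq I) (P : pred I) (F : I -> {poly CC}) :
  shift h c (\prod_(i <- r | P i) F i) = \prod_(i <- r | P i) shift h c (F i).
Proof.
apply: (big_ind2 (fun a b => shift h c a = b)) => //.
  by rewrite /shift comp_polyC.
by move=> x1 x2 y1 y2 <- <-; rewrite shiftM.
Qed.

Lemma shift_lin h c (u v : CC) :
  shift h c ('X - u%:P + v%:P) = 'X - u%:P + (v - c%:~R * h)%:P.
Proof.
rewrite /shift comp_polyD comp_polyB comp_polyX !comp_polyC polyCB; ring.
Qed.

Lemma shift_shift h i j (f : {poly CC}) :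
  shift h i (shift h j f) = shift h (i + j) f.
Proof.
rewrite /shift -comp_polyA comp_polyB comp_polyX comp_polyC.
congr comp_poly; rewrite intrD mulrDl polyCD; ring.
Qed.

Lemma shift0 h (f : {poly CC}) : shift h 0 f = f.
Proof. by rewrite /shift mul0r polyC0 subr0 comp_polyXr. Qed.

Lemma Tk h c (u : CC) (n : nat) :
  \prod_(1 <= j < n.+1) ('X - u%:P + (c%:~R * j%:R * h)%:P) * ('X - u%:P)
  = shift h c (\prod_(1 <= j < n.+1) ('X - u%:P + (c%:~R * j%:R * h)%:P))
    * ('X - u%:P + (c%:~R * n%:R * h)%:P).
Proof.
rewrite shift_prod; elim: n => [|n IH].
  by rewrite !big_geq // mulr0n mulr0 mul0r addr0.
rewrite big_nat_recr //= [in RHS]big_nat_recr //= shift_lin.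
have -> : c%:~R * n.+1%:R * h - c%:~R * h = c%:~R * n%:R * h :> CC.
  by rewrite -natr1; ring.
rewrite -mulrA [_ * ('X - u%:P)]mulrC mulrA IH; ring.
Qed.

Lemma TpolyE p (z : 'I_p -> CC) h c n :
  Tpoly z h c n * \prod_(k < p) ('X - (z k)%:P)
  = shift h c (Tpoly z h c n) *
    \prod_(k < p) ('X - (z k)%:P + (c%:~R * (n k)%:R * h)%:P).
Proof.
rewrite /Tpoly shift_prod -!big_split /=; apply: eq_bigr => k _; exact: Tk.
Qed.

Lemma lin_neq0 (u v : CC) : 'X - u%:P + v%:P != 0.
Proof.
have -> : 'X - u%:P + v%:P = 'X + (v - u)%:P by rewrite polyCB; ring.
by rewrite -size_poly_eq0 size_XaddC.
Qed.

Lemma shift_neq0 h c (f : {poly CC}) : (shift h c f != 0) = (f != 0).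
Proof. by rewrite /shift comp_poly2_eq0 // size_XsubC. Qed.

Lemma Tpoly_neq0 p (z : 'I_p -> CC) h c n : Tpoly z h c n != 0.
Proof.
rewrite /Tpoly; apply/prodf_neq0 => k _.
rewrite prodf_seq_neq0; apply/allP => j _; exact: lin_neq0.
Qed.

Lemma prodXsub_neq0 (I : finType) (F : I -> CC) : \prod_(i : I) ('X - (F i)%:P) != 0.
Proof.
apply/prodf_neq0 => k _.
by rewrite -size_poly_eq0 size_XsubC.
Qed.

Lemma ratioK (K : fieldType) (t ts d q x yy : K) :
  ts != 0 -> d != 0 -> t * d = ts * q -> t * x / (ts * yy) = q * x / (d * yy).
Proof.
move=> ts0 d0 E.
have -> : t = ts * q / d by rewrite -E mulfK.
rewrite !invfM.
transitivity ((ts * ts^-1) * (q * x * (d^-1 * yy^-1))); first ring.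
by rewrite mulfV // mul1r.
Qed.

Lemma ratio (T Ts Dp Q X Y : {poly CC}) :
  Ts != 0 -> Dp != 0 -> T * Dp = Ts * Q ->
  rf (T * X) / rf (Ts * Y) = rf Q * rf X / (rf Dp * rf Y).
Proof.
move=> Ts0 D0 E; rewrite /rf !tofracM; apply: ratioK.
- by rewrite tofrac_eq0.
- by rewrite tofrac_eq0.
- by rewrite -!tofracM E.
Qed.

Lemma key (K : fieldType) (sg Nn Dd y Ys yt Yt ph ps phs pss : K) :
  Dd != 0 -> y != 0 -> (yt = 0 -> Yt = 0) -> y * Yt = ph - ps ->
  Ys * yt = phs - pss ->
  sg * ((ph * Nn) * Ys / (Dd * y)) + (- sg) * ((ps * Nn) * Ys / (Dd * y))
  = (- sg) * ((pss * Nn) * Yt / (Dd * yt)) + sg * ((phs * Nn) * Yt / (Dd * yt)).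
Proof.
move=> D0 y0 Y0 H1 H2.
transitivity (sg * (ph - ps) * Nn * Ys / (Dd * y)); first ring.
transitivity (sg * (phs - pss) * Nn * Yt / (Dd * yt)); last ring.
rewrite -H1 -H2.
have [yt0|yt0] := eqVneq yt 0.
  by rewrite (Y0 yt0) yt0 !(mulr0, mul0r).
by field; rewrite D0 y0 yt0.
Qed.

Lemma s1N b : s1 (~~ b) = - s1 b. Proof. by case: b. Qed.
Lemma s2N b : s2 (~~ b) = s1 b. Proof. by case: b. Qed.

Theorem lemma4p4 (h : CC) (p : nat) (a b : 'I_p -> nat) (z : 'I_p -> CC)
    (bs : bool) (l : nat) (t : 'I_l -> CC) (ytil : {poly CC}) :
  h != 0 ->
  weights_ok a b ->
  typical a b ->
  h_generic z h ->
  BAE_solution a b z h bs t ->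
  let y := \prod_(j < l) ('X - (t j)%:P) in
  let S1 := s1 bs in let S2 := s2 bs in
  let St1 := s1 (~~ bs) in let St2 := s2 (~~ bs) in
  let T1 := Tpoly z h S1 a in let T2 := Tpoly z h S2 b in
  let Tt1 := Tpoly z h St1 (at_ a b) in let Tt2 := Tpoly z h St2 (bt_ a b) in
  y * shift h (- S1) ytil = phi a b z h bs - psi a b z h bs ->
  (S1%:~R * (rf (T1 * shift h S1 y) / rf (shift h S1 T1 * y))
   + S2%:~R * (rf (T2 * shift h (- S2) y) / rf (shift h S2 T2 * y)) : ratfun)
  = St1%:~R * (rf (Tt1 * shift h St1 ytil) / rf (shift h St1 Tt1 * ytil))
   + St2%:~R * (rf (Tt2 * shift h (- St2) ytil) / rf (shift h St2 Tt2 * ytil)).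
Proof.
move=> _ wok _ _ _ y S1 S2 St1 St2 T1 T2 Tt1 Tt2 Hy.
set D := \prod_(k < p) ('X - (z k)%:P).
set N := \prod_(k < p | ~~ typicalk a b k) ('X - (z k)%:P).
have nontyp k : ~~ typicalk a b k -> a k = 0%N /\ b k = 0%N.
  by rewrite /typicalk negbK addn_eq0 => /andP[/eqP -> /eqP ->].
have typa k : typicalk a b k -> exists m, a k = m.+1.
  case E: (a k) => [|m] tk; last by exists m.
  by move: tk; rewrite /typicalk E (wok _ E).
have D0 : D != 0 by apply: prodXsub_neq0.
have y0 : y != 0 by apply: prodXsub_neq0.
have splitN c (n : 'I_p -> nat) F :
    (forall k, ~~ typicalk a b k -> n k = 0%N) ->
    (forall k, typicalk a b k ->
       'X - (z k)%:P + (c%:~R * (n k)%:R * h)%:P = F k) ->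
    \prod_(k < p) ('X - (z k)%:P + (c%:~R * (n k)%:R * h)%:P)
    = \prod_(k < p | typicalk a b k) F k * N.
  move=> Hn HF; rewrite (bigID (typicalk a b)) /=; congr (_ * _).
    by apply: eq_bigr => k tk; rewrite HF.
  by apply: eq_bigr => k tk; rewrite Hn // mulr0n mulr0 mul0r addr0.
have E1 : T1 * D = shift h S1 T1 * (phi a b z h bs * N).
  rewrite TpolyE (splitN _ _ (fun k => 'X - (z k)%:P + ((s1 bs)%:~R * (a k)%:R * h)%:P)) //.
  by move=> k /nontyp[].
have E2 : T2 * D = shift h S2 T2 * (psi a b z h bs * N).
  rewrite TpolyE (splitN _ _ (fun k => 'X - (z k)%:P + ((s2 bs)%:~R * (b k)%:R * h)%:P)) //.
  by move=> k /nontyp[].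
have E3 : Tt1 * D = shift h St1 Tt1 * (shift h S1 (psi a b z h bs) * N).
  rewrite TpolyE (splitN _ _ (fun k => shift h S1 ('X - (z k)%:P + ((s2 bs)%:~R * (b k)%:R * h)%:P))).
  - by rewrite /psi [shift h S1 _]shift_prod.
  - by move=> k tk; rewrite /at_ (negbTE tk).
  - move=> k tk; rewrite shift_lin /at_ tk /St1 /S1 s1N /s2 -natr1.
  congr (_ + _%:P); rewrite intrN; ring.
have E4 : Tt2 * D = shift h St2 Tt2 * (shift h S1 (phi a b z h bs) * N).
  rewrite TpolyE (splitN _ _ (fun k => shift h S1 ('X - (z k)%:P + ((s1 bs)%:~R * (a k)%:R * h)%:P))).
  - by rewrite /phi [shift h S1 _]shift_prod.
  - by move=> k tk; rewrite /bt_ (negbTE tk).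
  - move=> k tk; rewrite shift_lin /bt_ tk /St2 /S1 s2N.
  have [m ->] := typa k tk; rewrite -natr1 /=.
  congr (_ + _%:P); ring.
rewrite (ratio _ _ _ _ _ _ _ _ E1) ?shift_neq0 ?Tpoly_neq0 //.
rewrite (ratio _ _ _ _ _ _ _ _ E2) ?shift_neq0 ?Tpoly_neq0 //.
rewrite (ratio _ _ _ _ _ _ _ _ E3) ?shift_neq0 ?Tpoly_neq0 //.
rewrite (ratio _ _ _ _ _ _ _ _ E4) ?shift_neq0 ?Tpoly_neq0 //.
have -> : - S2 = S1 by rewrite /S2 /s2 opprK.
have -> : S2 = - S1 by [].
have -> : St1 = - S1 by rewrite /St1 s1N.
have -> : - St2 = - S1 by rewrite /St2 s2N.
have -> : St2 = S1 by rewrite /St2 s2N.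
rewrite intrN /rf !tofracM.
apply: key.
- by rewrite tofrac_eq0.
- by rewrite tofrac_eq0.
- by move/eqP; rewrite tofrac_eq0 => /eqP ->; rewrite /shift comp_poly0.
- by rewrite -tofracM Hy tofracB.
- rewrite -tofracM -tofracB -shiftB -Hy shiftM shift_shift.
  by rewrite addrN shift0.
Qed.
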